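(* Assume $X$ is convex, $f$ is convex, and $X^\infty\cap\mathcal{K}(f)\neq\{0\}$. Then there exists a sequence $u_k\in\mathbb{R}^n$ with $u_k\to0$ such that $\mathrm{Sol}(u_k)=\emptyset$ for every $k\in\mathbb{N}$.
   Context: Standing assumptions: $f:\mathbb{R}^n\to\mathbb{R}\cup\{\pm\infty\}$ is proper (never $-\infty$ and finite at some point) and lower semicontinuous; $X\subset\mathbb{R}^n$ is a nonempty closed set with $\operatorname{dom}f\cap X$ unbounded. $X^\infty=\{u:\exists t_k\to+\infty,\ \exists x_k\in X,\ x_k/t_k\to u\}$; $f^\infty(d)=\inf\{\liminf_{k} f(t_kd_k)/t_k:\ t_k\to+\infty,\ d_k\to d\}$; $\mathcal{K}(f)=\{d: f^\infty(d)\le 0\}$. For $u\in\mathbb{R}^n$, $f_u(x)=f(x)-\langle u,x\rangle$ and $\mathrm{Sol}(u)=\{x\in X: f_u(x)\le f_u(y)\ \forall y\in X\}$. *)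

(* Defs.v *)
From HB Require Import structures.
From mathcomp Require Import all_boot all_order all_algebra.
From mathcomp Require Import all_classical all_reals all_analysis.
Set Implicit Arguments. Unset Strict Implicit. Unset Printing Implicit Defensive.
Import Order.TTheory GRing.Theory Num.Theory.
Import numFieldNormedType.Exports.
Local Open Scope classical_set_scope.
Local Open Scope ring_scope.

Section Defs.
Variables (R : realType) (n : nat).
Implicit Types (x y u d : 'rV[R]_n) (X : set 'rV[R]_n) (f : 'rV[R]_n -> \bar R).

Definition dotp (u x : 'rV[R]_n) : R := \sum_(i < n) u ord0 i * x ord0 i.

Definition proper_fun f : Prop :=
  (forall x, f x <> -oo%E) /\ (exists x, f x \is a fin_num).

Definition dom f : set 'rV[R]_n := [set x | (f x < +oo)%E].

(* f is never -oo in our use, so the right-hand side is well defined *)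
Definition convex_fun f : Prop :=
  forall x y (l : R), 0 < l < 1 ->
    (f (l *: x + (1 - l) *: y)%R <= l%:E * f x + (1 - l)%:E * f y)%E.

Definition asym_cone X : set 'rV[R]_n :=
  [set u | exists (t : nat -> R) (xs : nat -> 'rV[R]_n),
      t @ \oo --> +oo /\ (forall k, X (xs k)) /\
      (fun k => (t k)^-1 *: xs k) @ \oo --> u].

Definition asym_fun f (d : 'rV[R]_n) : \bar R :=
  ereal_inf [set v | exists (t : nat -> R) (ds : nat -> 'rV[R]_n),
      t @ \oo --> +oo /\ ds @ \oo --> d /\
      v = limn_einf (fun k => (f (t k *: ds k)%R * ((t k)^-1)%:E)%E)].

Definition Kf f : set 'rV[R]_n := [set d | (asym_fun f d <= 0)%E].

Definition tilt f (u : 'rV[R]_n) : 'rV[R]_n -> \bar R :=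
  fun x => (f x - (dotp u x)%:E)%E.

Definition Sol f X (u : 'rV[R]_n) : set 'rV[R]_n :=
  [set x | X x /\ forall y, X y -> (tilt f u x <= tilt f u y)%E].

End Defs.

(* Main.v *)
Require Import Defs.
From HB Require Import structures.
From mathcomp Require Import all_boot all_order all_algebra.
From mathcomp Require Import all_classical all_reals all_analysis.
From mathcomp Require Import ring lra.
Import Order.TTheory GRing.Theory Num.Theory.
Import numFieldNormedType.Exports.
Local Open Scope classical_set_scope.
Local Open Scope ring_scope.

Lemma convX (R : realType) n (X : set 'rV[R]_n) a b (l : R) :
  convex_set X -> X a -> X b -> 0 <= l -> l <= 1 ->
  X ((1 - l) *: a + l *: b).
Proof.
move=> cX Xa Xb l0 l1.
have := cX b a (Itv01 l0 l1) (mem_set Xb) (mem_set Xa).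
rewrite inE /= addrC.
done.
Qed.

Lemma inv_cvg0 {R : realType} (t : nat -> R) :
  t @ \oo --> +oo -> (fun k => (t k)^-1) @ \oo --> 0.
Proof.
move=> ht; apply/gtr0_cvgV0 => //.
by move/cvgryPgt : ht => /(_ 0).
Qed.

Lemma lim_einf_lt (R : realType) (u : nat -> \bar R) a N :
  (limn_einf u < a)%E -> exists k, (N <= k)%N /\ (u k < a)%E.
Proof.
move=> h.
have : (einfs u N < a)%E.
  apply: le_lt_trans h; rewrite limn_einf_lim.
  have /cvg_lim -> := @cvg_einfs_sup R u => //.
  by apply: ereal_sup_ubound; exists N.
move=> /ereal_inf_lt[_ [k /= Nk <-]] uk.
by exists k.
Qed.

Lemma recX (R : realType) n (X : set 'rV[R]_n) x d s :
  convex_set X -> closed X -> X x -> asym_cone X d -> 0 <= s ->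
  X (x + s *: d).
Proof.
move=> cX clX Xx [t [xs [ht [Xxs hc]]]] s0.
have it := inv_cvg0 t ht.
pose z k := (1 - s * (t k)^-1) *: x + (s * (t k)^-1) *: xs k.
apply: (@closed_cvg nat _ \oo _ z X clX)...
  move/cvgryPgt: ht => /(_ s) hts.
  near=> k.
  have tk : s < t k by near: k.
  have t0 : 0 < t k by apply: le_lt_trans tk.
  apply: convX => //.
    by rewrite mulr_ge0 // invr_ge0 ltW.
  by rewrite ler_pdivrMr // mul1r ltW.
have -> : z = fun k => (1 - s * (t k)^-1) *: x + s *: ((t k)^-1 *: xs k).
  by apply: funext => k; rewrite /z scalerA.
apply: cvgD; last exact: cvgZ (cvg_cst s) hc.
rewrite -[X in _ --> X]scale1r; apply: cvgZr_tmp.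
rewrite -[X in _ --> X]subr0; apply: cvgB; first exact: cvg_cst.
rewrite -(mulr0 s); exact: cvgMl_tmp.
Unshelve. all: by end_near.
Qed.

Lemma recf (R : realType) n (f : 'rV[R]_n -> \bar R) d x (r s e : R) :
  convex_fun f -> lower_semicontinuous f -> (forall y, f y <> -oo%E) ->
  Kf f d -> f x = r%:E -> 0 < s -> 0 < e ->
  (f (x + s *: d)%R <= (r + s * e)%:E)%E.
Proof.
move=> cf lsc nNy Kd fx s0 e0.
rewrite leNgt; apply/negP => /lsc[V hV HV].
have e20 : 0 < e / 2 by rewrite divr_gt0.
have : (asym_fun f d < (e / 2)%:E)%E by apply: le_lt_trans Kd _; rewrite lte_fin.
move=> /ereal_inf_lt[_ [t [ds [ht [hd ->]]]]] hlt.
have it := inv_cvg0 t ht.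
pose z k := (1 - s * (t k)^-1) *: x + s *: ds k.
have hz : z @ \oo --> x + s *: d.
  apply: cvgD; last exact: cvgZ (cvg_cst s) hd.
  rewrite -[X in _ --> X]scale1r; apply: cvgZr_tmp.
  rewrite -[X in _ --> X]subr0; apply: cvgB; first exact: cvg_cst.
  rewrite -(mulr0 s); exact: cvgMl_tmp.
have ev : \forall k \near \oo, V (z k) /\ s < t k /\ `|r * (t k)^-1| < e / 2.
  have h1 := hz _ hV.
  move/cvgryPgt: ht => /(_ s) h2.
  have h3 : (fun k => r * (t k)^-1) @ \oo --> 0.
    rewrite -(mulr0 r); exact: cvgMl_tmp.
  have := cvgr0_norm_lt _ h3 _ e20.
  move=> h4.
  near=> k; split; last split.
  - near: k; exact: h1.
  - near: k; exact: h2.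
  - near: k; exact: h4.
have [N _ HN] := ev.
have [k [Nk hk]] := lim_einf_lt _ _ _ N hlt.
have [Vz [tk rk]] := HN k Nk.
have t0 : 0 < t k by apply: lt_trans s0 tk.
have ez : z k = (1 - s / t k) *: x + (1 - (1 - s / t k)) *: (t k *: ds k).
  have -> : 1 - (1 - s / t k) = s / t k by rewrite opprB addrC subrK.
  by rewrite /z scalerA divfK // gt_eqF.
have l0 : 0 < s / t k by rewrite divr_gt0.
have l1 : s / t k < 1 by rewrite ltr_pdivrMr // mul1r.
have hc := cf x (t k *: ds k) (1 - s / t k).
have hc' : 0 < 1 - s / t k < 1.
  by apply/andP; split; [rewrite subr_gt0 | rewrite ltrBlDr ltrDl].
move: (hc hc') => {hc}hc.
have := HV _ Vz; rewrite ez => hV2.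
have hlt2 := lt_le_trans hV2 hc.
move: hk hlt2; rewrite fx.
case E: (f (t k *: ds k)) => [w| |].
- rewrite /= !lte_fin => hk hlt2.
  move: rk; rewrite ltr_norml => /andP[rk1 rk2].
  have a0 : 0 < (t k)^-1 by rewrite invr_gt0.
  set a := (t k)^-1 in hk rk1 rk2 hlt2 a0.
  have h1 : s * (w * a) < s * (e / 2) by rewrite ltr_pM2l.
  have h2 : s * (- (r * a)) < s * (e / 2) by rewrite ltr_pM2l // ltrNl.
  clear -hlt2 h1 h2 s0 e0; nra.
- by rewrite /= gt0_mulye ?lte_fin ?invr_gt0 // ltNge leey.
- by move: (nNy (t k *: ds k)); rewrite E.
Unshelve. all: by end_near.
Qed.

Lemma tS_cvg (R : realType) : (fun k : nat => (k.+1)%:R : R) @ \oo --> +oo.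
Proof. by have := @cvgr_idn R; rewrite -cvg_shiftS. Qed.

Lemma zero_in (R : realType) n (f : 'rV[R]_n -> \bar R) (X : set 'rV[R]_n) :
  X !=set0 -> proper_fun f -> (asym_cone X `&` Kf f) 0.
Proof.
move=> [x Xx] [nNy [x1 fx1]]; split.
  exists (fun k : nat => (k.+1)%:R : R), (fun=> x); split; first exact: tS_cvg.
  split => //.
  rewrite -(scale0r x); apply: cvgZr_tmp; exact: inv_cvg0 _ (tS_cvg R).
rewrite /Kf /=.
have [c fc] : exists c, f x1 = c%:E by move: fx1; case: (f x1) => // c; exists c.
apply: ereal_inf_lbound.
exists (fun k : nat => (k.+1)%:R : R), (fun k => ((k.+1)%:R : R)^-1 *: x1).
split; first exact: tS_cvg.
split.
  rewrite -(scale0r x1); apply: cvgZr_tmp; exact: inv_cvg0 _ (tS_cvg R).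
apply/esym.
have : (fun k : nat => (c * ((k.+1)%:R : R)^-1)%:E) @ \oo --> 0%E.
  apply: cvg_EFin; first by near=> k.
  rewrite -(mulr0 c); apply: cvgMl_tmp; exact: inv_cvg0 _ (tS_cvg R).
move=> /cvg_limn_einf_sup [<- _].
congr limn_einf; apply: funext => k.
by rewrite scalerA divff // scale1r fc.
Unshelve. all: by end_near.
Qed.

Lemma dotpD (R : realType) n (u x y : 'rV[R]_n) :
  dotp u (x + y) = dotp u x + dotp u y.
Proof. by rewrite /dotp -big_split; apply: eq_bigr => i _; rewrite mxE mulrDr. Qed.

Lemma dotpZ (R : realType) n (u x : 'rV[R]_n) a :
  dotp u (a *: x) = a * dotp u x.
Proof. by rewrite /dotp mulr_sumr; apply: eq_bigr => i _; rewrite mxE mulrCA. Qed.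

Lemma dotpZl (R : realType) n (u x : 'rV[R]_n) a :
  dotp (a *: u) x = a * dotp u x.
Proof. by rewrite /dotp mulr_sumr; apply: eq_bigr => i _; rewrite mxE mulrA. Qed.

Lemma dotp_gt0 (R : realType) n (d : 'rV[R]_n) : d != 0 -> 0 < dotp d d.
Proof.
move=> d0.
have sq : forall i : 'I_n, true -> 0 <= d ord0 i * d ord0 i.
  by move=> i _; rewrite -expr2 sqr_ge0.
rewrite /dotp lt_def sumr_ge0 ?andbT //.
apply/negP => /eqP /(psumr_eq0P sq) H.
move/negP: d0; apply; apply/eqP/rowP => i.
rewrite !mxE; have := H i isT.
by move/eqP; rewrite mulf_eq0 orbb => /eqP.
Qed.

Theorem mainTheorem6 (R : realType) (n : nat)
    (f : 'rV[R]_n -> \bar R) (X : set 'rV[R]_n) :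
  proper_fun f ->
  lower_semicontinuous f ->
  X !=set0 ->
  closed X ->
  ~ bounded_set (dom f `&` X) ->
  convex_set X ->
  convex_fun f ->
  asym_cone X `&` Kf f <> [set (0 : 'rV[R]_n)] ->
  exists u : nat -> 'rV[R]_n,
    u @ \oo --> (0 : 'rV[R]_n) /\ forall k : nat, Sol f X (u k) = set0.
Proof.
move=> pf lsc Xne clX nb cX cf hne.
have [nNy _] := pf.
have [d [[Xd Kd] d0]] : exists d, (asym_cone X `&` Kf f) d /\ d != 0.
  case: (pselect (exists d, (asym_cone X `&` Kf f) d /\ d != 0)) => // H.
  exfalso; apply: hne; apply/seteqP; split => y.
    move=> hy; case: (eqVneq y 0) => // yn; exfalso; apply: H; exists y; by split.
  by move=> ->; apply: zero_in.
have [x0 [dx0 Xx0]] : (dom f `&` X) !=set0.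
  case: (pselect ((dom f `&` X) !=set0)) => // H; exfalso; apply: nb.
  have -> : dom f `&` X = set0.
    by apply/seteqP; split => y hy //; exfalso; apply: H; exists y.
  by exists 0; split => // M _ y.
have [r fr] : exists r, f x0 = r%:E.
  move: dx0 (nNy x0); rewrite /dom /=; case: (f x0) => // r _ _; by exists r.
pose u k := (((k.+1)%:R : R)^-1) *: d.
exists u; split.
  rewrite -(scale0r d); apply: cvgZr_tmp; exact: inv_cvg0 _ (tS_cvg R).
move=> k; apply/seteqP; split => // y [Xy Hy].
have c0 : 0 < ((k.+1)%:R : R)^-1 by rewrite invr_gt0 ltr0Sn.
set dl := dotp (u k) d.
have dl0 : 0 < dl by rewrite /dl /u dotpZl mulr_gt0 // dotp_gt0.
set C := r - dotp (u k) x0.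
have claim : forall s, 0 < s -> (tilt f (u k) y <= (C - s * (dl / 2))%:E)%E.
  move=> s s0.
  have h1 := Hy _ (recX _ _ _ _ _ _ cX clX Xx0 Xd (ltW s0)).
  apply: (le_trans h1).
  have hf := recf _ _ _ _ _ _ _ _ cf lsc nNy Kd fr s0 (divr_gt0 dl0 (ltr0Sn _ 1)).
  rewrite /tilt dotpD dotpZ -/dl.
  move: hf; case: (f (x0 + s *: d)) => [w| |] //=; rewrite ?lte_fin ?lee_fin.
  - move=> hw; rewrite /C; lra.
  - by move=> _; rewrite leNye.
move: (claim 1 ltr01); rewrite /tilt.
case E: (f y) (nNy y) => [q| |] // _ /=.
  rewrite lee_fin => _.
  set rho := q - dotp (u k) y.
  pose s := (`|C - rho| + 1) * 2 / dl.
  have s0 : 0 < s by rewrite /s !mulr_gt0 ?invr_gt0 // ltr_pwDr.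
  have := claim s s0; rewrite /tilt E -/rho lee_fin.
  have -> : s * (dl / 2) = `|C - rho| + 1.
    by rewrite /s; field; rewrite gt_eqF.
  have := ler_norm (C - rho); rewrite /rho; lra.
Qed.
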